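(* Consider a finite MDP with state space $\mathcal{X}=\{1,\dots,n\}$, finite action set $\mathcal{A}$, costs $c(i,a)\in\mathbb{R}$, discount factor $\vartheta\in(0,1)$, nominal transition probability vectors $p^a_i\in\Delta_n$, confidence regions $U^a_i$ and proxy confidence regions $\widehat{U^a_i}$ as described in the context, and let $\mathrm{Q}^*$ be the robust optimal $\mathrm{Q}$-factors. Let the step lengths $\gamma_t\ge 0$ satisfy $\sum_{t=0}^\infty\gamma_t=\infty$ and $\sum_{t=0}^\infty\gamma_t^2<\infty$. Let $\beta^a_i:=\max_{y\in\widehat{U^a_i}}\min_{x\in U^a_i}\|y-x\|_1$ and $\beta:=\max_{i\in\mathcal{X},a\in\mathcal{A}}\beta^a_i$. If $\vartheta(1+\beta)<1$, then with probability $1$ the robust $\mathrm{Q}$-iteration \[ \mathrm{Q}_t(i,a)=(1-\gamma_t)\mathrm{Q}_{t-1}(i,a)+\gamma_t\Big(c(i,a)+\vartheta\,\sigma_{\widehat{U^a_i}}(v_{t-1})+\vartheta\min_{a'\in\mathcal{A}}\mathrm{Q}_{t-1}(j,a')\Big), \] where $v_{t-1}(k):=\min_{a\in\mathcal{A}}\mathrm{Q}_{t-1}(k,a)$ and $j$ is a state sampled according to $p^a_i$, converges to $\mathrm{Q}$-factors $\mathrm{Q}'$ that are $\varepsilon$-optimal, i.e. $\|\mathrm{Q}'-\mathrm{Q}^*\|_\infty\le\varepsilon\|\mathrm{Q}^*\|_\infty$, where $\varepsilon:=\dfrac{\vartheta\beta}{1-\vartheta(1+\beta)}$.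
   Context: Setting: for each state $i\in\mathcal{X}$ and action $a\in\mathcal{A}$, $p^a_i\in\Delta_n$ (the probability simplex in $\mathbb{R}^n$) is an unknown transition probability vector from which next states can only be sampled. A confidence region $U^a_i\subseteq\mathbb{R}^n$ (nonempty, compact) defines the uncertainty set $\mathcal{P}^a_i:=\{p^a_i+x\mid x\in U^a_i\}$, assumed to lie in $\Delta_n$. The proxy confidence region $\widehat{U^a_i}\supseteq U^a_i$ is a nonempty compact set (obtained by dropping the constraints that keep $\mathcal{P}^a_i$ inside the simplex); it need not satisfy $p^a_i+\widehat{U^a_i}\subseteq\Delta_n$. For $S\subseteq\mathbb{R}^n$, $\sigma_S(v):=\sup_{s\in S}s^\top v$. The robust optimal $\mathrm{Q}$-factors $\mathrm{Q}^*:\mathcal{X}\times\mathcal{A}\to\mathbb{R}$ are the solution of $\mathrm{Q}^*(i,a)=c(i,a)+\vartheta\,\sigma_{\mathcal{P}^a_i}(v^* )$ with $v^*(k)=\min_{a\in\mathcal{A}}\mathrm{Q}^*(k,a)$ (the Q-factors of the policy minimizing the worst-case expected discounted cost over transitions chosen from the sets $\mathcal{P}^a_i$). $\mathrm{Q}$-factors are viewed as $|\mathcal{X}|\times|\mathcal{A}|$ matrices and $\|\mathrm{Q}\|_\infty=\max_{i,a}|\mathrm{Q}(i,a)|$. In the iteration, $\mathrm{Q}_0$ is arbitrary and at each step the update is applied to each pair $(i,a)$ with a fresh sample $j\sim p^a_i$. *)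

(* Defs.v *)
From HB Require Import structures.
From mathcomp Require Import all_boot all_order all_algebra.
From mathcomp Require Import all_classical all_reals all_analysis.
Set Implicit Arguments. Unset Strict Implicit. Unset Printing Implicit Defensive.
Import Order.TTheory GRing.Theory Num.Theory.
Import numFieldNormedType.Exports.
Local Open Scope classical_set_scope.
Local Open Scope ring_scope.

Section RobustQ.
Variables (R : realType) (n : nat) (A : finType).

Definition qfactor := 'I_n -> A -> R.

Definition qnorm (Q : qfactor) : R := \big[Num.max/0]_(i : 'I_n) \big[Num.max/0]_(a : A) `|Q i a|.

(* v(k) = min_{a in A} Q(k,a) ; a0 is any action (A nonempty) *)
Definition vmin (a0 : A) (Q : qfactor) (k : 'I_n) : R :=
  \big[Num.min/Q k a0]_(a : A) Q k a.

Definition vvec (a0 : A) (Q : qfactor) : 'rV[R]_n := \row_k vmin a0 Q k.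

Definition simplex : set 'rV[R]_n :=
  [set p | (forall k, 0 <= p ord0 k) /\ \sum_k p ord0 k = 1].

Definition support_fun (S : set 'rV[R]_n) (v : 'rV[R]_n) : R :=
  sup [set \sum_k s ord0 k * v ord0 k | s in S].

Definition norm1 (x : 'rV[R]_n) : R := \sum_k `|x ord0 k|.

Definition beta_of (Uhat U : set 'rV[R]_n) : R :=
  sup [set inf [set norm1 (y - x) | x in U] | y in Uhat].

(* the robust Q-iteration, driven by samples J t i a (used at step t >= 1) *)
Fixpoint robustQ {Omega : Type} (a0 : A) (c : 'I_n -> A -> R) (theta : R)
  (Uhat : A -> 'I_n -> set 'rV[R]_n) (gamma : nat -> R)
  (J : nat -> 'I_n -> A -> Omega -> 'I_n) (Q0 : qfactor) (t : nat) (w : Omega)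
  : qfactor :=
  match t with
  | 0 => Q0
  | t'.+1 => fun i a =>
      (1 - gamma t'.+1) * robustQ a0 c theta Uhat gamma J Q0 t' w i a
      + gamma t'.+1 * (c i a
          + theta * support_fun (Uhat a i) (vvec a0 (robustQ a0 c theta Uhat gamma J Q0 t' w))
          + theta * vmin a0 (robustQ a0 c theta Uhat gamma J Q0 t' w) (J t'.+1 i a w))
  end.

End RobustQ.
Arguments simplex {R n}.

Definition mutually_independent (R : realType) (d : measure_display)
  (Omega : measurableType d) (P : probability Omega R) (I : eqType) (n : nat)
  (X : I -> Omega -> 'I_n) : Prop :=
  forall (s : seq I) (x : I -> 'I_n), uniq s ->
    P (\bigcap_(k in [set k | k \in s]) [set w | X k w = x k]) =
    (\prod_(k <- s) P [set w | X k w = x k])%E.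

(* Main.v *)
Require Import Defs.
From HB Require Import structures.
From mathcomp Require Import all_boot all_order all_algebra.
From mathcomp Require Import all_classical all_reals all_analysis.
From mathcomp Require Import ring lra.
Import Order.TTheory GRing.Theory Num.Theory.
Import numFieldNormedType.Exports.
Local Open Scope classical_set_scope.
Local Open Scope ring_scope.
Set Implicit Arguments. Unset Strict Implicit. Unset Printing Implicit Defensive.
Ltac clear_fun_lets := repeat match goal with | [ f := _ : _ -> _ |- _ ] => clearbody f end.
Ltac lra' := clear_fun_lets; lra.
Ltac nra' := clear_fun_lets; nra.
Section Basics.
Variable R : realType.

Lemma sum_delta (I : finType) (F : I -> R) (k : I) :
  \sum_x F x * (x == k)%:R = F k.
Proof.
rewrite (bigD1 k) //= eqxx mulr1 big1 ?addr0 // => x /negPf ->.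
by rewrite mulr0.
Qed.

Lemma single_le_sum (I : finType) (F : I -> R) (k : I) :
  (forall x, 0 <= F x) -> F k <= \sum_x F x.
Proof.
move=> h; rewrite (bigD1 k) //= lerDl; exact: sumr_ge0.
Qed.

Lemma abs_entry_le n (s : 'rV[R]_n) k : `|s ord0 k| <= `|s|.
Proof.
rewrite [X in _ <= X]mx_normrE.
exact: (le_bigmax _ (fun ij : 'I_1 * 'I_n => `|s ij.1 ij.2|) (ord0, k)).
Qed.

Lemma compact_entry_bound n (S : set 'rV[R]_n) : compact S ->
  exists M, 0 <= M /\ forall s, S s -> forall k, `|s ord0 k| <= M.
Proof.
move=> /compact_bounded [M0 [_ HM]].
exists (`|M0| + 1); split; first by rewrite addr_ge0.
move=> s Ss k; apply: le_trans (abs_entry_le s k) _.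
apply: (HM (`|M0| + 1)) => //.
have := ler_norm M0; lra.
Qed.

Lemma bigsetU_seqP T (I : eqType) (s : seq I) (F : I -> set T) w :
  (\big[setU/set0]_(x <- s) F x) w <-> exists2 x, x \in s & F x w.
Proof.
elim: s => [|y s ih]; first by rewrite big_nil; split => // -[].
rewrite big_cons; split.
- case=> [h|/ih [x xs h]]; first by exists y => //; rewrite in_cons eqxx.
  by exists x => //; rewrite in_cons xs orbT.
- case=> x; rewrite in_cons => /orP [/eqP -> h|xs h]; first by left.
  by right; apply/ih; exists x.
Qed.

Lemma bigsetU_ordP T n (F : 'I_n -> set T) w :
  (\big[setU/set0]_(x < n) F x) w <-> exists x, F x w.
Proof.
rewrite bigsetU_seqP; split; first by case=> x _ h; exists x.
by case=> x h; exists x => //; rewrite mem_index_enum.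
Qed.

Lemma setI_bigsetU_ord T n (F : 'I_n -> set T) (B : set T) :
  B `&` \big[setU/set0]_(x < n) F x = \big[setU/set0]_(x < n) (B `&` F x).
Proof.
apply/seteqP; split => w.
- by case=> bw /bigsetU_ordP [x h]; apply/bigsetU_ordP; exists x.
- by move/bigsetU_ordP => [x [bw h]]; split => //; apply/bigsetU_ordP; exists x.
Qed.

End Basics.
Section Supp.
Variable R : realType.
Variable n : nat.
Implicit Types (s v y x : 'rV[R]_n) (S U Uh : set 'rV[R]_n).

Definition dot s v := \sum_k s ord0 k * v ord0 k.

Lemma dot_bound s v M : (forall k, `|s ord0 k| <= M) ->
  `|dot s v| <= M * \sum_k `|v ord0 k|.
Proof.
move=> h; apply: le_trans (ler_norm_sum _ _ _) _.
rewrite mulr_sumr; apply: ler_sum => k _; rewrite normrM.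
by apply: ler_wpM2r => //.
Qed.

Lemma supp_ub S M v s : (forall s, S s -> forall k, `|s ord0 k| <= M) ->
  S s -> dot s v <= support_fun S v.
Proof.
move=> hM Ss; apply: ub_le_sup; last by exists s.
exists (M * \sum_k `|v ord0 k|) => _ [s' Ss' <-].
apply: le_trans (ler_norm _) _; exact: dot_bound (hM _ Ss').
Qed.

Lemma supp_le S v b : S !=set0 -> (forall s, S s -> dot s v <= b) ->
  support_fun S v <= b.
Proof.
move=> [s0 S0] h; apply: ge_sup; first by exists (dot s0 v), s0.
by move=> _ [s Ss <-]; apply: h.
Qed.

Lemma norm1_ge0 x : 0 <= norm1 x.
Proof. exact: sumr_ge0. Qed.

Lemma norm1_sub_le y x M : (forall k, `|y ord0 k| <= M) ->
  (forall k, `|x ord0 k| <= M) -> norm1 (y - x) <= (M + M) * n%:R.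
Proof.
move=> hy hx; rewrite /norm1.
apply: le_trans (_ : \sum_(k < n) (M + M) <= _); last first.
  by rewrite sumr_const card_ord mulr_natr.
apply: ler_sum => k _; rewrite !mxE.
apply: le_trans (ler_normB _ _) _; exact: lerD.
Qed.

Lemma beta_lb Uh U M y c b :
  U !=set0 -> U `<=` Uh -> (forall s, Uh s -> forall k, `|s ord0 k| <= M) ->
  Uh y -> 0 <= c -> (forall x, U x -> b <= c * norm1 (y - x)) ->
  b <= c * beta_of Uh U.
Proof.
move=> [x0 Ux0] UUh hM Uhy c0 h.
have [ceq|cpos] := eqVneq c 0.
  by subst c; rewrite mul0r; have := h x0 Ux0; rewrite mul0r.
have cgt0 : 0 < c by rewrite lt_neqAle eq_sym cpos c0.
rewrite -ler_pdivrMl //.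
apply: (@le_trans _ _ (inf [set norm1 (y - x) | x in U])).
  apply: lb_le_inf; first by exists (norm1 (y - x0)), x0.
  by move=> _ [x Ux <-]; rewrite ler_pdivrMl //; exact: h.
apply: ub_le_sup; last by exists y.
exists ((M + M) * n%:R) => _ [y' Uhy' <-].
apply: (@le_trans _ _ (norm1 (y' - x0))).
  apply: ge_inf; last by exists x0.
  by exists 0 => _ [x _ <-]; exact: norm1_ge0.
apply: norm1_sub_le; first exact: hM.
exact: hM (UUh _ Ux0).
Qed.

Lemma simplex_norm1 x : simplex x -> norm1 x = 1.
Proof.
move=> [h0 h1]; rewrite /norm1 -h1; apply: eq_bigr => k _.
by rewrite ger0_norm.
Qed.

Lemma simplex_entry x k : simplex x -> 0 <= x ord0 k <= 1.
Proof.
move=> [h0 h1]; rewrite h0 /= -h1.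
by apply: single_le_sum.
Qed.

Lemma norm1_triangle y z : norm1 (y + z) <= norm1 y + norm1 z.
Proof.
rewrite /norm1 -big_split /=; apply: ler_sum => k _; rewrite mxE.
exact: ler_normD.
Qed.

End Supp.
Section QOps.
Variables (R : realType) (n : nat) (A : finType) (a0 : A).
Variables (c : 'I_n -> A -> R) (theta : R) (p : A -> 'I_n -> 'rV[R]_n).
Variables (U Uhat : A -> 'I_n -> set 'rV[R]_n).
Implicit Types (Q : qfactor R n A).

Definition qdiff Q Q' : qfactor R n A := fun i a => Q i a - Q' i a.

Lemma qnorm_ge0 Q : 0 <= qnorm Q.
Proof. exact: bigmax_ge_id. Qed.

Lemma qnorm_entry Q i a : `|Q i a| <= qnorm Q.
Proof.
apply: le_trans (le_bigmax _ (fun i => \big[Num.max/0]_a `|Q i a|) i).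
exact: (le_bigmax _ (fun a => `|Q i a|) a).
Qed.

Lemma qnorm_le Q b : 0 <= b -> (forall i a, `|Q i a| <= b) -> qnorm Q <= b.
Proof.
move=> b0 h; apply: bigmax_le => // i _; apply: bigmax_le => // a _; exact: h.
Qed.

Lemma vmin_le Q k a : vmin a0 Q k <= Q k a.
Proof. exact: bigmin_le. Qed.

Lemma vmin_ge Q k b : (forall a, b <= Q k a) -> b <= vmin a0 Q k.
Proof. by move=> h; apply: le_bigmin => // a _. Qed.

Lemma vmin_lip Q Q' k : `|vmin a0 Q k - vmin a0 Q' k| <= qnorm (qdiff Q Q').
Proof.
set D := qnorm _.
have h1 Q1 Q2 : (forall a, `|Q1 k a - Q2 k a| <= D) -> vmin a0 Q2 k - D <= vmin a0 Q1 k.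
  move=> h; apply: vmin_ge => a; have := vmin_le Q2 k a; have := h a.
  rewrite ler_norml => /andP[ha hb]; lra.
rewrite ler_norml; apply/andP; split.
  have := h1 Q Q' (fun a => qnorm_entry (qdiff Q Q') k a); lra.
have : vmin a0 Q k - D <= vmin a0 Q' k.
  apply: h1 => a; rewrite distrC; exact: qnorm_entry (qdiff Q Q') k a.
lra.
Qed.

Lemma vmin_abs Q k : `|vmin a0 Q k| <= qnorm Q.
Proof.
rewrite ler_norml; apply/andP; split.
  apply: vmin_ge => a; have := qnorm_entry Q k a; rewrite ler_norml => /andP[]//.
apply: le_trans (vmin_le Q k a0) _; apply: le_trans (ler_norm _) _.
exact: qnorm_entry.
Qed.

Lemma vvecE Q k : vvec a0 Q ord0 k = vmin a0 Q k.
Proof. by rewrite mxE. Qed.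

Definition Tp Q : qfactor R n A := fun i a =>
  c i a + theta * (support_fun (Uhat a i) (vvec a0 Q) + dot (p a i) (vvec a0 Q)).

Definition beta := \big[Num.max/0]_(i : 'I_n) \big[Num.max/0]_(a : A)
                beta_of (Uhat a i) (U a i).

Hypothesis Hsimp : forall a i, [set p a i + x | x in U a i] `<=` simplex.
Hypothesis HU : forall a i, U a i !=set0.
Hypothesis HUh : forall a i, U a i `<=` Uhat a i.
Hypothesis HM : forall a i, exists M, forall s, Uhat a i s -> forall k, `|s ord0 k| <= M.
Hypothesis Htheta : 0 <= theta.

Lemma beta_ge0 : 0 <= beta.
Proof. exact: bigmax_ge_id. Qed.

Lemma beta_of_le a i : beta_of (Uhat a i) (U a i) <= beta.
Proof.
apply: le_trans (le_bigmax _ (fun i => \big[Num.max/0]_a beta_of (Uhat a i) (U a i)) i).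
exact: (le_bigmax _ (fun a => beta_of (Uhat a i) (U a i)) a).
Qed.

Lemma norm1_py a i y : Uhat a i y -> norm1 (p a i + y) <= 1 + beta.
Proof.
move=> Uy; have [M hM] := HM a i.
have : norm1 (p a i + y) - 1 <= 1 * beta_of (Uhat a i) (U a i).

  apply: (beta_lb (HU a i) (@HUh a i) hM Uy) => // x Ux.
  have e : p a i + y = (p a i + x) + (y - x) by rewrite addrACA subrr addr0.
  rewrite e mul1r; have := norm1_triangle (p a i + x) (y - x).
  have hs : simplex (p a i + x) by apply: (@Hsimp a i); exists x.
  rewrite (simplex_norm1 hs).
  lra.
have := beta_of_le a i; lra.
Qed.

Lemma dot_diff (s v w : 'rV[R]_n) : dot s v - dot s w = \sum_k s ord0 k * (v ord0 k - w ord0 k).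
Proof. by rewrite /dot -sumrB; apply: eq_bigr => k _; rewrite mulrBr. Qed.

Lemma supp_lip a i (v w : 'rV[R]_n) (D : R) : 0 <= D -> (forall k, `|v ord0 k - w ord0 k| <= D) ->
  support_fun (Uhat a i) v + dot (p a i) v <=
  support_fun (Uhat a i) w + dot (p a i) w + (1 + beta) * D.
Proof.
move=> D0 hD; have [M hM] := HM a i.
have [x0 Ux0] := HU a i.
suff : support_fun (Uhat a i) v <=
    support_fun (Uhat a i) w + dot (p a i) w + (1 + beta) * D - dot (p a i) v by lra.
apply: supp_le; first by exists x0; apply: HUh.
move=> y Uy.
have h1 := supp_ub w hM Uy.
have e : dot y v + dot (p a i) v - (dot y w + dot (p a i) w) =
    \sum_k (p a i + y) ord0 k * (v ord0 k - w ord0 k).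
  rewrite opprD addrACA dot_diff dot_diff -big_split /=.
  by apply: eq_bigr => k _; rewrite mxE mulrDl addrC.
have h2 : \sum_k (p a i + y) ord0 k * (v ord0 k - w ord0 k) <= (1 + beta) * D.
  apply: le_trans (_ : norm1 (p a i + y) * D <= _); last first.
    by apply: ler_wpM2r => //; exact: norm1_py.
  rewrite /norm1 mulr_suml; apply: ler_sum => k _.
  apply: le_trans (ler_norm _) _; rewrite normrM; exact: ler_wpM2l.
lra.
Qed.

Definition rho := theta * (1 + beta).

Lemma Tp_lip Q Q' i a : `|Tp Q i a - Tp Q' i a| <= rho * qnorm (qdiff Q Q').
Proof.
set D := qnorm _.
have D0 : 0 <= D by exact: qnorm_ge0.
have hk : forall k, `|vvec a0 Q ord0 k - vvec a0 Q' ord0 k| <= D.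
  by move=> k; rewrite !vvecE; exact: vmin_lip.
have hk' : forall k, `|vvec a0 Q' ord0 k - vvec a0 Q ord0 k| <= D.
  by move=> k; rewrite distrC.
have l1 := supp_lip a i D0 hk.
have l2 := supp_lip a i D0 hk'.
rewrite /Tp /rho.
set X := support_fun _ (vvec a0 Q) + _ in l1 l2 *.
set Y := support_fun _ (vvec a0 Q') + _ in l1 l2 *.
have -> : c i a + theta * X - (c i a + theta * Y) = theta * (X - Y) by ring.
rewrite normrM ger0_norm // -mulrA; apply: ler_wpM2l => //.
rewrite ler_norml; apply/andP; split; lra.
Qed.

Hypothesis Hbeta : 0 <= beta.

Lemma Tstar_bound Qstar :
  (forall i a, Qstar i a = c i a + theta *
       support_fun [set p a i + x | x in U a i] (vvec a0 Qstar)) ->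
  forall i a, `|Tp Qstar i a - Qstar i a| <= theta * beta * qnorm Qstar.
Proof.
move=> HQ i a; rewrite HQ /Tp.
set v := vvec a0 Qstar.
set Dv := qnorm Qstar.
have Dv0 : 0 <= Dv by exact: qnorm_ge0.
have hv : forall k, `|v ord0 k| <= Dv by move=> k; rewrite vvecE; exact: vmin_abs.
have [M hM] := HM a i.
have [x0 Ux0] := HU a i.
have hb1 : forall s, [set p a i + x | x in U a i] s -> forall k, `|s ord0 k| <= 1.
  move=> s hs k; have := simplex_entry k (Hsimp hs).
  by move=> /andP[h0 h1]; rewrite ger0_norm.
have E1 : support_fun [set p a i + x | x in U a i] v <=
          support_fun (Uhat a i) v + dot (p a i) v.
  apply: supp_le; first by exists (p a i + x0), x0.
  move=> _ [x Ux <-].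
  have : dot (p a i + x) v = dot (p a i) v + dot x v.
    by rewrite /dot -big_split; apply: eq_bigr => k _; rewrite mxE mulrDl.
  have := supp_ub v hM (HUh Ux); lra.
have E2 : support_fun (Uhat a i) v + dot (p a i) v <=
          support_fun [set p a i + x | x in U a i] v + beta * Dv.
  suff : support_fun (Uhat a i) v <=
      support_fun [set p a i + x | x in U a i] v + beta * Dv - dot (p a i) v by lra.
  apply: supp_le; first by exists x0; apply: HUh.
  move=> y Uy.
  have : dot y v + dot (p a i) v - support_fun [set p a i + x | x in U a i] v
         <= Dv * beta_of (Uhat a i) (U a i).
    apply: (beta_lb (HU a i) (@HUh a i) hM Uy) => // x Ux.
    have h3 := supp_ub v hb1 (ex_intro2 _ _ x Ux erefl : [set p a i + x | x in U a i] (p a i + x)).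
    have e3 : dot (p a i + x) v = dot (p a i) v + dot x v.
      by rewrite /dot -big_split; apply: eq_bigr => k _; rewrite mxE mulrDl.
    have h4 : dot y v - dot x v <= Dv * norm1 (y - x).
      rewrite /norm1 mulr_sumr /dot -sumrB; apply: ler_sum => k _.
      rewrite -mulrBl !mxE; apply: le_trans (ler_norm _) _.
      rewrite normrM [X in _ <= X]mulrC; apply: ler_wpM2l => //; exact: vmin_abs.
    lra.
  have := ler_wpM2l Dv0 (beta_of_le a i); lra.
set S1 := support_fun [set _ | _ in _] v in E1 E2 *.
set S2 := support_fun (Uhat a i) v in E1 E2 *.
have -> : c i a + theta * (S2 + dot (p a i) v) - (c i a + theta * S1) =
          theta * (S2 + dot (p a i) v - S1) by ring.
rewrite normrM ger0_norm // -mulrA; apply: ler_wpM2l => //.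
rewrite ler_norml; apply/andP; split; nra.
Qed.

End QOps.
Section FixedPoint.
Variables (R : realType) (n : nat) (A : finType).
Variable T : qfactor R n A -> qfactor R n A.
Variable rho : R.
Hypothesis rho0 : 0 <= rho.
Hypothesis rho1 : rho < 1.
Hypothesis Tlip : forall Q Q' i a, `|T Q i a - T Q' i a| <= rho * qnorm (qdiff Q Q').

Let Z : qfactor R n A := fun _ _ => 0.
Let X m := iter m T Z.

Lemma fp_exists : exists Q', forall i a, T Q' i a = Q' i a.
Proof.
have hr : 1 - rho != 0 by rewrite subr_eq0 eq_sym lt_eqF.
set C0 := qnorm (qdiff (X 1) (X 0)).
have C00 : 0 <= C0 by exact: qnorm_ge0.
have L1 : forall m, qnorm (qdiff (X m.+1) (X m)) <= rho ^+ m * C0.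
  elim=> [|m ih]; first by rewrite expr0 mul1r.
  apply: qnorm_le; first by apply: mulr_ge0 => //; exact: exprn_ge0.
  move=> i a; rewrite /qdiff /X /= -/(X m.+1) -/(X m).
  apply: le_trans (Tlip _ _ i a) _.
  by rewrite exprS -mulrA; apply: ler_wpM2l.
set K := qnorm (T Z) / (1 - rho).
have K0 : 0 <= K by apply: divr_ge0; [exact: qnorm_ge0 | rewrite subr_ge0 ltW].
have L2 : forall m, qnorm (X m) <= K.
  elim=> [|m ih].
    by apply: qnorm_le => // i a; rewrite /X /= /Z normr0.
  apply: qnorm_le => // i a; rewrite /X /= -/(X m).
  have h1 := Tlip (X m) Z i a.
  have h2 : qnorm (qdiff (X m) Z) <= K.
    apply: qnorm_le => // i' a'; rewrite /qdiff /Z subr0; exact: le_trans (qnorm_entry _ _ _) ih.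
  have h3 := qnorm_entry (T Z) i a.
  have h4 : rho * qnorm (qdiff (X m) Z) <= rho * K by exact: ler_wpM2l.
  have h5 : qnorm (T Z) + rho * K = K.
    by rewrite /K; field.
  have := ler_normB (T (X m) i a - T Z i a) (- T Z i a).
  rewrite opprK subrK normrN; lra'.
have cvgX : forall i a, cvgn (fun m => X m i a).
  move=> i a.
  set z := fun m => X m i a + geometric (C0 / (1 - rho)) rho m.
  have zdec : {homo z : k m / (k <= m)%N >-> m <= k}.
    apply/nonincreasing_seqP => m; rewrite /z /=.
    have h2 := qnorm_entry (qdiff (X m.+1) (X m)) i a.
    have h3 : qdiff (X m.+1) (X m) i a = T (X m) i a - X m i a by [].
    rewrite h3 in h2.
    have := L1 m; rewrite exprS.
    set r := rho ^+ m.
    have r0 : 0 <= r by exact: exprn_ge0.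
    move=> h1.
    have e1 : C0 / (1 - rho) * (rho * r) = C0 / (1 - rho) * r - r * C0.
      by field.
    rewrite e1; have := ler_norm (T (X m) i a - X m i a).
    lra'.
  have zlb : has_lbound (range z).
    exists (- K) => _ [m _ <-]; rewrite /z /=.
    have := qnorm_entry (X m) i a; have := L2 m.
    have : 0 <= C0 / (1 - rho) * rho ^+ m.
      by apply: mulr_ge0; [apply: divr_ge0 => //; rewrite subr_ge0 ltW | exact: exprn_ge0].
    have := ler_norm (- X m i a); rewrite normrN; lra'.
  have cz := nonincreasing_is_cvgn zdec zlb.
  have cg : cvgn (geometric (C0 / (1 - rho)) rho).
    apply/cvg_ex; exists 0; apply: cvg_geometric; rewrite ger0_norm //.
  suff -> : (fun m => X m i a) = z - geometric (C0 / (1 - rho)) rho.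
    exact: is_cvgB cz cg.
  by apply/funext => m; rewrite /z !fctE /=; ring.
set Q' := fun i a => limn (fun m => X m i a).
exists Q' => i a.
apply/eqP; rewrite -subr_eq0 -normr_eq0 eq_le normr_ge0 andbT.
apply/ler_addgt0Pr => eps eps0; rewrite add0r.
set e' := eps / 2.
have e'0 : 0 < e' by rewrite divr_gt0.
have h : forall i a, \forall m \near \oo, `|Q' i a - X m i a| < e'.
  move=> i' a'; have := cvgX i' a'.
  by move/cvg_ex => [l hl]; rewrite /Q' (cvg_lim _ hl) //; move/cvgrPdist_lt : hl; apply.
have h' : \forall m \near \oo, forall i, forall a, `|Q' i a - X m i a| < e'.
  by apply: filter_forall => i'; apply: filter_forall => a'; exact: h.
move: h' => [N _ HN].
have hN := HN N (leqnn N).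
have hN1 := HN N.+1 (leqnSn N).
have hq : qnorm (qdiff Q' (X N)) <= e'.
  by apply: qnorm_le; [exact: ltW | move=> i' a'; exact: ltW (hN i' a')].
have t1 := Tlip Q' (X N) i a.
have t2 : T (X N) i a = X N.+1 i a by [].
have t3 := hN1 i a.
have t4 : rho * qnorm (qdiff Q' (X N)) <= e'.
  have h1 := ler_wpM2l rho0 hq.
  have h2 : rho * e' <= e' by apply: ler_piMl; exact: ltW.
  exact: le_trans h1 h2.
have := ler_normD (T Q' i a - T (X N) i a) (X N.+1 i a - Q' i a).
rewrite t2 in t1 *.
rewrite distrC in t3.
have -> : T Q' i a - X N.+1 i a + (X N.+1 i a - Q' i a) = T Q' i a - Q' i a by ring.
have : e' = eps / 2 by [].
lra'.
Qed.

End FixedPoint.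
Section RealSeq.
Variable R : realType.

Definition evz (u : nat -> R) :=
  forall e, 0 < e -> exists N, forall t, (N <= t)%N -> u t <= e.

Lemma sum_split (g : nat -> R) a m :
  \sum_(s < (a + m)%N) g s = \sum_(s < a) g s + \sum_(i < m) g (a + i)%N.
Proof. by rewrite big_split_ord. Qed.

Lemma evz_scale (u : nat -> R) K : 0 <= K -> evz u -> evz (fun t => K * u t).
Proof.
move=> K0 hu e e0.
have [N hN] := hu (e / (K + 1)) (divr_gt0 e0 (ltr_pwDr ltr01 K0)).
exists N => t /hN h.
have K1 : 0 < K + 1 by lra.
rewrite ler_pdivlMr // in h.
have : K * u t <= (K + 1) * u t \/ u t < 0.
  case: (lerP 0 (u t)) => hu0; [left; nra | by right].
case=> [h1|h2]; last by nra.
nra.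
Qed.

Lemma contr_seq (e g lam : nat -> R) (mu : R) T0 :
  0 < mu -> mu <= 1 -> (forall t, 0 <= e t) ->
  (forall t, (T0 <= t)%N -> 0 <= g t.+1 <= 1) ->
  (forall t, (T0 <= t)%N -> e t.+1 <= (1 - g t.+1 * mu) * e t + g t.+1 * lam t) ->
  evz lam ->
  (forall M, exists N, forall t, (N <= t)%N -> M <= \sum_(s < t) g s) ->
  evz e.
Proof.
move=> mu0 mu1 e0 hg hrec hlam hdiv eps eps0.
set eh := eps / 2.
have eh0 : 0 < eh by rewrite divr_gt0.
have [N1 hN1] := hlam (mu * eh) (mulr_gt0 mu0 eh0).
set T1 := maxn T0 N1.
set d := fun t => Num.max (e t - eh) 0.
have d0 : forall t, 0 <= d t by move=> t; rewrite le_max lexx orbT.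
have hd : forall t, e t - eh <= d t by move=> t; rewrite le_max lexx.
have step : forall t, (T1 <= t)%N -> d t.+1 <= (1 - g t.+1 * mu) * d t.
  move=> t ht.
  have hT0 : (T0 <= t)%N by apply: leq_trans ht; exact: leq_maxl.
  have hN : (N1 <= t)%N by apply: leq_trans ht; exact: leq_maxr.
  have /andP[g0 g1] := hg t hT0.
  have gm : 0 <= 1 - g t.+1 * mu by nra.
  have := hrec t hT0; have := hN1 t hN; have := hd t; have := d0 t.
  rewrite /d ge_max => h1 h2 h3 h4; apply/andP; split; last by nra.
  nra.
have G0 : forall m, 0 <= \sum_(i < m) g (T1.+1 + i)%N.
  move=> m; apply: sumr_ge0 => i _.
  have : (T0 <= T1 + i)%N by apply: leq_trans (leq_maxl _ _) (leq_addr _ _).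
  by move/hg => /andP[] ; rewrite -addSn.
have ind : forall m, d (T1 + m)%N * (1 + mu * \sum_(i < m) g (T1.+1 + i)%N) <= d T1.
  elim=> [|m ih]; first by rewrite big_ord0 addn0 mulr0 addr0 mulr1.
  rewrite big_ord_recr /= addnS.
  have hs := step (T1 + m)%N (leq_addr _ _).
  have /andP[g0 g1] := hg (T1 + m)%N (leq_trans (leq_maxl _ _) (leq_addr _ _)).
  have := G0 m; have := d0 (T1 + m)%N; have := d0 (T1 + m).+1.
  rewrite -addSn in hs g0 g1 *.
  set G := \sum_(i < m) _ in ih *.
  set gg := g _ in hs g0 g1 *.
  move=> h1 h2 h3.
  apply: le_trans ih.
  have hgm : 0 <= 1 - gg * mu by nra.
  apply: le_trans (_ : (1 - gg * mu) * d (T1 + m)%N * (1 + mu * (G + gg)) <= _).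
    by apply: ler_wpM2r; [nra | exact: hs].
  have : (1 - gg * mu) * (1 + mu * (G + gg)) <= 1 + mu * G.
    have -> : (1 - gg * mu) * (1 + mu * (G + gg)) = 1 + mu * G - gg * mu * (mu * G + gg * mu) by ring.
    have : 0 <= gg * mu * (mu * G + gg * mu).
      apply: mulr_ge0; first by apply: mulr_ge0 => //; exact: ltW.
      by apply: addr_ge0; apply: mulr_ge0 => //; exact: ltW.
    lra.
  move=> h; rewrite mulrAC [X in _ <= X]mulrC; apply: ler_wpM2r => //.
set K := d T1 / (mu * eh).
have [N2 hN2] := hdiv (\sum_(s < T1.+1) g s + K).
exists (maxn N2 T1.+1) => t.
rewrite geq_max => /andP[tN2 tT1].
have := hN2 t tN2.
rewrite -(subnKC tT1) sum_split.
set m := (t - T1.+1)%N.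
move=> hG.
have hK : K <= \sum_(i < m) g (T1.+1 + i)%N by lra.
have := ind m.+1; rewrite big_ord_recr /= addnS -addSn.
have hK0 : d T1 = K * (mu * eh) by rewrite /K divfK // mulf_neq0 // gt_eqF.
have /andP[gg0 _] := hg (T1 + m)%N (leq_trans (leq_maxl _ _) (leq_addr _ _)).
rewrite -addSn in gg0.
have := hd (T1.+1 + m)%N; have := d0 (T1.+1 + m)%N.
have := G0 m.
set G := \sum_(i < m) _ in hK *.
set gg := g _ in gg0 *.
move=> h0 h1 h2 h3.
have : d (T1.+1 + m)%N <= eh.
  have Kmu : K * (mu * eh) <= eh * (1 + mu * (G + gg)).
    have e1 : eh * (1 + mu * (G + gg)) = eh + (G + gg) * (mu * eh) by ring.
    rewrite e1; have : K * (mu * eh) <= (G + gg) * (mu * eh).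
      by apply: ler_wpM2r; [apply: mulr_ge0; exact: ltW | lra].
    lra.
  have pos : 0 < 1 + mu * (G + gg) by nra.
  rewrite -(ler_pM2r pos); rewrite hK0 in h3; exact: le_trans h3 Kmu.
have ehE : eh = eps / 2 by []. lra.
Qed.

Lemma combine (e q kap g : nat -> R) rho C T0 :
  0 <= rho -> rho < 1 -> 0 <= C ->
  (forall t, 0 <= e t) -> (forall t, 0 <= q t) -> (forall t, 0 <= kap t) -> evz kap ->
  (forall t, (T0 <= t)%N -> 0 <= g t.+1 <= 1) ->
  (forall t, (T0 <= t)%N -> e t.+1 <=
      (1 - g t.+1) * e t + g t.+1 * (rho * q t + kap t * (q t + C))) ->
  (forall t, q t <= e t + kap t * (q t + C)) ->
  (forall M, exists N, forall t, (N <= t)%N -> M <= \sum_(s < t) g s) ->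
  evz q.
Proof.
move=> r0 r1 C0 e0 q0 k0 hk hg H1 H2 hdiv.
have k0pos : 0 < (1 - rho) / 8 by lra.
have [T2 hT2] := hk _ k0pos.
have hq : forall t, (T2 <= t)%N -> q t <= (1 + 2 * kap t) * e t + 2 * kap t * C.
  move=> t /hT2 ht; have := H2 t; have := k0 t; have := e0 t; have := q0 t.
  move: (kap t) (e t) (q t) ht => k ee qq ht h1 h2 h3 h4.
  have p1 : 0 <= k * (1 - 2 * k) * (ee + C).
    by apply: mulr_ge0; [apply: mulr_ge0; lra | lra].
  have pk : 0 < 1 - k by lra.
  rewrite -(ler_pM2l pk); nra.
have hdec : forall t, (maxn T0 T2 <= t)%N ->
    e t.+1 <= (1 - g t.+1 * ((1 - rho) / 2)) * e t + g t.+1 * (4 * C * kap t).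
  move=> t; rewrite geq_max => /andP[tT0 tT2].
  have := H1 t tT0; have := hq t tT2; have := hT2 t tT2; have /andP[g0 g1] := hg t tT0.
  have := k0 t; have := e0 t; have := q0 t.
  move: (kap t) (e t) (q t) (g t.+1) (e t.+1) g0 g1 => k ee qq gg ee' g0 g1 h0 h1 h2 h3 h4 h5.
  have s0 : (rho + k) * qq <= (rho + k) * ((1 + 2 * k) * ee + 2 * k * C).
    by apply: ler_wpM2l => //; lra.
  have p2 : 0 <= k * (3 - 2 * rho - 2 * k) * (ee + C).
    by apply: mulr_ge0; [apply: mulr_ge0; lra | lra].
  have s1 : rho * qq + k * (qq + C) <= (rho + 4 * k) * ee + 4 * k * C by nra.
  have s2 : gg * (rho * qq + k * (qq + C)) <= gg * ((rho + 4 * k) * ee + 4 * k * C).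
    exact: ler_wpM2l.
  have p3 : 0 <= gg * ee * ((1 - rho) / 2 - 4 * k).
    by apply: mulr_ge0; [apply: mulr_ge0 | lra].
  nra.
have he : evz e.
  apply: (@contr_seq e g (fun t => 4 * C * kap t) ((1 - rho) / 2) (maxn T0 T2)) => //.
  - lra.
  - lra.
  - by move=> t ht; apply: hg; apply: leq_trans ht; exact: leq_maxl.
  - by apply: evz_scale => //; lra.
move=> eps eps0.
have [N3 hN3] := he (eps / 4) (divr_gt0 eps0 (ltr0n _ 4)).
have [N4 hN4] := evz_scale (ltac:(lra) : 0 <= 2 * C) hk (divr_gt0 eps0 (ltr0n _ 2)).
exists (maxn T2 (maxn N3 N4)) => t; rewrite !geq_max => /and3P[tT2 tN3 tN4].
have := hq t tT2; have := hN3 t tN3; have := hN4 t tN4; have := hT2 t tT2.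
have := k0 t; have := e0 t.
move: (kap t) (e t) => k ee h0 h1 h2 h3 h4 h5.
have p4 : 0 <= ((1 - rho) / 8 - k) * ee by apply: mulr_ge0; lra.
nra.
Qed.

End RealSeq.
Section Prob.
Variables (R : realType) (d : measure_display) (Omega : measurableType d).
Variable (P : probability Omega R).
Variables (n : nat) (A : finType) (J : nat -> 'I_n -> A -> Omega -> 'I_n).
Variables (i : 'I_n) (a : A) (k : 'I_n) (q : 'I_n -> R) (gamma : nat -> R).

Hypothesis Hmeas : forall t x, measurable [set w | J t i a w = x].
Hypothesis Hq0 : forall x, 0 <= q x.
Hypothesis Hq1 : \sum_x q x = 1.
Hypothesis Hatom : forall (us : seq nat) (y : nat -> 'I_n), uniq us ->
  P (\big[setI/setT]_(u <- us) [set w | J u i a w = y u]) = (\prod_(u <- us) q (y u))%:E.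

Definition fstep t (x : 'I_n) := gamma t * ((x == k)%:R - q k).

Fixpoint Ev (eps : R) (L t : nat) (s0 : R) : set Omega :=
  if eps <= `|s0| then setT else
  match L with
  | 0 => set0
  | L'.+1 => \big[setU/set0]_(x < n)
      ([set w | J t.+1 i a w = x] `&` Ev eps L' t.+1 (s0 + fstep t.+1 x))
  end.

Fixpoint Pr (eps : R) (L t : nat) (s0 : R) : R :=
  if eps <= `|s0| then 1 else
  match L with
  | 0 => 0
  | L'.+1 => \sum_(x < n) q x * Pr eps L' t.+1 (s0 + fstep t.+1 x)
  end.

Lemma Ev_meas eps L t s0 : measurable (Ev eps L t s0).
Proof.
elim: L t s0 => [|L ih] t s0 /=; case: ifP => _ //.
apply: bigsetU_measurable => x _; apply: measurableI => //; exact: ih.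
Qed.

Lemma q_le1 x : q x <= 1.
Proof. rewrite -Hq1; exact: single_le_sum. Qed.

Lemma sum_qf t : \sum_x q x * fstep t x = 0.
Proof.
rewrite (eq_bigr (fun x => gamma t * (q x * (x == k)%:R) - gamma t * q k * q x)); last first.
  by move=> x _; rewrite /fstep; ring.
by rewrite sumrB -!mulr_sumr sum_delta Hq1; ring.
Qed.

Lemma sum_qf2 t : \sum_x q x * fstep t x ^+ 2 <= gamma t ^+ 2.
Proof.
apply: le_trans (_ : \sum_x q x * gamma t ^+ 2 <= _); last first.
  by rewrite -mulr_suml Hq1 mul1r.
apply: ler_sum => x _; apply: ler_wpM2l => //.
rewrite /fstep exprMn; have := q_le1 k; have := Hq0 k.
have : (x == k)%:R = 0 :> R \/ (x == k)%:R = 1 :> R by case: (x == k); auto.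
case=> -> h1 h2; rewrite -[X in _ <= X]mulr1; (apply: ler_wpM2l; [exact: sqr_ge0| nra]).
Qed.

Lemma Kolm eps L t s0 : 0 < eps ->
  eps ^+ 2 * Pr eps L t s0 <= s0 ^+ 2 + \sum_(r < L) gamma (t.+1 + r)%N ^+ 2.
Proof.
move=> eps0.
have base : forall s, eps <= `|s| -> eps ^+ 2 <= s ^+ 2.
  move=> s h; rewrite -real_normK ?num_real //; nra.
have sg0 : forall L t, 0 <= \sum_(r < L) gamma (t.+1 + r)%N ^+ 2.
  by move=> L' t'; apply: sumr_ge0 => r _; exact: sqr_ge0.
elim: L t s0 => [|L ih] t s0 /=; case: ifP => h.
- rewrite mulr1 big_ord0 addr0; exact: base.
- rewrite mulr0 big_ord0 addr0; exact: sqr_ge0.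
- rewrite mulr1; have := base _ h; have := sg0 L.+1 t; lra.
- rewrite big_ord_recl /= addn0.
  rewrite (eq_bigr (fun r : 'I_L => gamma (t.+2 + r)%N ^+ 2)); last first.
    by move=> r _; rewrite /bump /= add1n addnS addSn.
  set V := \sum_(r < L) _.
  apply: le_trans (_ : \sum_x q x * ((s0 + fstep t.+1 x) ^+ 2 + V) <= _).
    rewrite mulr_sumr; apply: ler_sum => x _.
    rewrite mulrCA; apply: ler_wpM2l => //; exact: ih.
  rewrite (eq_bigr (fun x => (s0 ^+ 2 + V) * q x + 2 * s0 * (q x * fstep t.+1 x)
                   + q x * fstep t.+1 x ^+ 2)); last by move=> x _; ring.
  rewrite !big_split /= -!mulr_sumr Hq1 sum_qf.
  have := sum_qf2 t.+1; lra.
Qed.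

Definition Atom (us : seq nat) (y : nat -> 'I_n) : set Omega :=
  \big[setI/setT]_(u <- us) [set w | J u i a w = y u].

Lemma Atom_meas us y : measurable (Atom us y).
Proof. by apply: bigsetI_measurable => u _. Qed.

Lemma bigsetI_seqP T (I : eqType) (s : seq I) (F : I -> set T) w :
  (\big[setI/setT]_(x <- s) F x) w <-> (forall x, x \in s -> F x w).
Proof.
elim: s => [|y s ih]; first by rewrite big_nil; split.
rewrite big_cons; split.
- case=> h1 /ih h2 x; rewrite in_cons => /orP[/eqP ->//|]; exact: h2.
- move=> h; split; first by apply: h; rewrite in_cons eqxx.
  by apply/ih => x xs; apply: h; rewrite in_cons xs orbT.
Qed.

Lemma Pr_link eps L t s0 us y : uniq us -> (forall u, u \in us -> (u <= t)%N) ->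
  P (Atom us y `&` Ev eps L t s0) = (\prod_(u <- us) q (y u) * Pr eps L t s0)%:E.
Proof.
elim: L t s0 us y => [|L ih] t s0 us y Hu Ht /=; case: ifP => h.
- by rewrite setIT mulr1 Hatom.
- by rewrite setI0 measure0 mulr0.
- by rewrite setIT mulr1 Hatom.
- rewrite setI_bigsetU_ord.
  set y' := fun x u => if u == t.+1 then x else y u.
  have tn : t.+1 \notin us.
    by apply/negP => /Ht; rewrite ltnn.
  have E : forall x, Atom us y `&` ([set w | J t.+1 i a w = x] `&`
       Ev eps L t.+1 (s0 + fstep t.+1 x)) =
       Atom (t.+1 :: us) (y' x) `&` Ev eps L t.+1 (s0 + fstep t.+1 x).
    move=> x; rewrite /Atom big_cons /y' eqxx.
    have Ay : \big[setI/setT]_(u <- us) [set w | J u i a w = (if u == t.+1 then x else y u)]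
            = \big[setI/setT]_(u <- us) [set w | J u i a w = y u].
      apply: eq_big_seq => u uus /=; have [eu|hne] := eqVneq u t.+1.
        by move: (Ht u uus); rewrite eu ltnn.
      by [].
    by rewrite Ay setIA [_ `&` Atom _ _]setIC /Atom.
  rewrite (eq_bigr _ (fun x _ => E x)).
  rewrite measure_bigsetU_ord; last 2 first.
  + by move=> x; apply: measurableI; [exact: Atom_meas | exact: Ev_meas].
  + move=> x1 x2 _ _ [w [[/bigsetI_seqP h1 _] [/bigsetI_seqP h2 _]]].
    have := h1 t.+1 (mem_head _ _); have := h2 t.+1 (mem_head _ _).
    by rewrite /y' eqxx => e2 e1; rewrite -e1 -e2.
  rewrite (eq_bigr (fun x => (q x * \prod_(u <- us) q (y u) * Pr eps L t.+1 (s0 + fstep t.+1 x))%:E)); last first.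
    move=> x _.
    have hu' : uniq (t.+1 :: us) by rewrite /= tn.
    have ht' : forall u, u \in t.+1 :: us -> (u <= t.+1)%N.
      by move=> u; rewrite in_cons => /orP[/eqP ->//|/Ht]; exact: leqW.
    apply: eq_trans (ih t.+1 (s0 + fstep t.+1 x) (t.+1 :: us) (y' x) hu' ht') _.
    congr (_%:E); congr (_ * _).
    rewrite big_cons /y' eqxx; congr (_ * _).
    apply: eq_big_seq => u uus /=; have [eu|hne] := eqVneq u t.+1.
      by move: (Ht u uus); rewrite eu ltnn.
    by [].
  rewrite sumEFin; congr (_%:E); rewrite mulr_sumr; apply: eq_bigr => x _; ring.
Qed.

Lemma P_Ev eps L t s0 : P (Ev eps L t s0) = (Pr eps L t s0)%:E.
Proof.
have hnil : forall u : nat, u \in [::] -> (u <= t)%N by [].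
have := @Pr_link eps L t s0 [::] (fun _ => k) erefl hnil.
by rewrite /Atom !big_nil setTI mul1r.
Qed.

Lemma Ev_mono eps L t s0 : Ev eps L t s0 `<=` Ev eps L.+1 t s0.
Proof.
elim: L t s0 => [|L ih] t s0 /=; case: ifP => // _; first by [].
move=> w /bigsetU_ordP [x [h1 h2]]; apply/bigsetU_ordP; exists x; split => //.
exact: ih.
Qed.

Lemma Ev_mem eps L t s0 w j : (j <= L)%N ->
  eps <= `|s0 + \sum_(r < j) fstep (t.+1 + r)%N (J (t.+1 + r)%N i a w)| ->
  Ev eps L t s0 w.
Proof.
elim: L t s0 j => [|L ih] t s0 j hj /=; case: ifP => h // hs.
- by move: hj hs; rewrite leqn0 => /eqP ->; rewrite big_ord0 addr0 h.
- case: j hj hs => [|j] hj hs; first by move: hs; rewrite big_ord0 addr0 h.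
  apply/bigsetU_ordP; exists (J t.+1 i a w); split => //.
  apply: (ih _ _ j) => //.
  rewrite big_ord_recl /= addn0 addrA in hs.
  rewrite (eq_bigr (fun r : 'I_j => fstep (t.+2 + r)%N (J (t.+2 + r)%N i a w))) in hs; last first.
    by move=> r _; rewrite /bump /= add1n addnS addSn.
  exact: hs.
Qed.

End Prob.
Section ProbAS.
Variables (R : realType) (d : measure_display) (Omega : measurableType d).
Variable (P : probability Omega R).
Variables (n : nat) (A : finType) (J : nat -> 'I_n -> A -> Omega -> 'I_n).
Variables (i : 'I_n) (a : A) (k : 'I_n) (q : 'I_n -> R) (gamma : nat -> R).

Hypothesis Hmeas : forall t x, measurable [set w | J t i a w = x].
Hypothesis Hq0 : forall x, 0 <= q x.
Hypothesis Hq1 : \sum_x q x = 1.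
Hypothesis Hatom : forall (us : seq nat) (y : nat -> 'I_n), uniq us ->
  P (\big[setI/setT]_(u <- us) [set w | J u i a w = y u]) = (\prod_(u <- us) q (y u))%:E.
Hypothesis Hg2 : cvgn (series (fun t => gamma t ^+ 2)).

Definition Sp (m : nat) (w : Omega) : R :=
  \sum_(r < m) fstep k q gamma r.+1 (J r.+1 i a w).

Lemma Sp_diff m L w : Sp (m + L) w - Sp m w =
  \sum_(r < L) fstep k q gamma (m.+1 + r)%N (J (m.+1 + r)%N i a w).
Proof.
rewrite /Sp big_split_ord /=.
rewrite addrAC subrr add0r; apply: eq_bigr => r _; by rewrite addSn.
Qed.

Lemma as_cvg : {ae P, forall w, cvgn (fun m => Sp m w)}.
Proof.
set G2 := series (fun t => gamma t ^+ 2).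
have G2nd : {homo G2 : x y / (x <= y)%N >-> x <= y}.
  apply/nondecreasing_seqP => m; rewrite /G2 /series /= big_nat_recr //=.
  by rewrite lerDl sqr_ge0.
have tailb : forall m L, \sum_(r < L) gamma (m.+1 + r)%N ^+ 2 <= limn G2 - G2 m.+1.
  move=> m L; have := nondecreasing_cvgn_le G2nd Hg2 (m.+1 + L)%N.
  have -> : G2 (m.+1 + L)%N = G2 m.+1 + \sum_(r < L) gamma (m.+1 + r)%N ^+ 2.
    by rewrite /G2 /series /= !big_mkord big_split_ord /=.
  lra.
have tail0 : forall del, 0 < del -> exists M, forall m, (M <= m)%N -> limn G2 - G2 m <= del.
  move=> del del0; have := Hg2; move/cvg_ex => [l hl].
  have := hl; move=> /cvgrPdist_lt /(_ del del0) [M _ HM].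
  exists M => m /HM /=; rewrite (cvg_lim _ hl) //.
  move=> h; apply: le_trans (ler_norm _) _; exact: ltW.
set epsj := fun j : nat => (j.+1%:R : R)^-1.
have epsj0 : forall j, 0 < epsj j by move=> j; rewrite /epsj invr_gt0 ltr0n.
set Bad := fun j => \bigcap_m \bigcup_L Ev J i a k q gamma (epsj j) L m 0.
have Bad_meas : forall j, measurable (Bad j).
  move=> j; apply: bigcapT_measurable => m; apply: bigcupT_measurable => L.
  exact: Ev_meas.
have Bad0 : forall j, P (Bad j) = 0%E.
  move=> j; apply/eqP; rewrite eq_le measure_ge0 andbT.
  apply/lee_addgt0Pr => del del0; rewrite add0e.
  have e20 : 0 < epsj j ^+ 2 by rewrite exprn_gt0.
  have [M hM] := tail0 (del * epsj j ^+ 2) (mulr_gt0 del0 e20).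
  have mU : measurable (\bigcup_L Ev J i a k q gamma (epsj j) L M 0).
    by apply: bigcupT_measurable => L; exact: Ev_meas.
  apply: (@le_trans _ _ (P (\bigcup_L Ev J i a k q gamma (epsj j) L M 0))).
    apply: le_measure; [rewrite inE; exact: Bad_meas | rewrite inE; exact: mU |].
    by move=> w hw; exact: hw M I.
  have mono : {homo (fun L => Ev J i a k q gamma (epsj j) L M 0) : x y / (x <= y)%N >-> x `<=` y}.
    apply: homo_leq; [by move=> x; exact: subset_refl
      | by move=> y x z h1 h2; exact: subset_trans h1 h2 | by move=> L; exact: Ev_mono].
  have mono' : {homo (fun L => Ev J i a k q gamma (epsj j) L M 0) : x y / (x <= y)%N >-> (x <= y)%O}.
    by move=> x y h; rewrite subsetEset; exact: mono.
  have cv := @nondecreasing_cvg_mu _ _ _ P _ (fun L => Ev_meas k q gamma Hmeas (epsj j) L M 0) mU mono'.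
  rewrite -(cvg_lim (@ereal_hausdorff R) cv).
  apply: lime_le; first by apply/cvg_ex; eexists; exact: cv.
  apply: nearW => L /=.
  rewrite (P_Ev k gamma Hmeas Hatom) lee_fin.
  have hk := Kolm k gamma Hq0 Hq1 L M 0 (epsj0 j).
  have ht := tailb M L.
  have hm := hM M.+1 (leqW (leqnn M)).
  rewrite expr0n /= add0r in hk.
  rewrite -(ler_pM2l e20) [X in _ <= X]mulrC.
  lra.
have nb : P.-negligible (\bigcup_j Bad j).
  apply: negligible_bigcup => j; apply/(negligibleP P (Bad_meas j)); exact: Bad0 j.
apply: negligibleS nb => w /= hw.
move: hw; apply: contra_notP => hnb.
apply/cauchy_cvgP/cauchy_exP => e e0.
have [N _ HN] := near_infty_natSinv_lt (PosNum e0).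
have hj : epsj N < e by exact: HN N (leqnn N).
have [m hm] : exists m, ~ (\bigcup_L Ev J i a k q gamma (epsj N) L m 0) w.
  apply/existsNP => hall; apply: hnb; exists N => //; move=> m _; exact: hall m.
exists (Sp m w); exists m => // t /= hmt.
rewrite -ball_normE /ball_ /=.
rewrite -(subnKC hmt) distrC Sp_diff.
set L := (t - m)%N.
have : `|\sum_(r < L) fstep k q gamma (m.+1 + r)%N (J (m.+1 + r)%N i a w)| < epsj N.
  rewrite ltNge; apply/negP => hge; apply: hm; exists L => //.
  apply: (@Ev_mem R d Omega n A J i a k q gamma (epsj N) L m 0 w L (leqnn L)).
  by rewrite add0r.
move=> h; exact: lt_trans h hj.
Qed.

End ProbAS.
Section Det.
Variables (R : realType) (n : nat) (A : finType) (a0 : A).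
Variables (T : qfactor R n A -> qfactor R n A) (rho theta : R) (gamma : nat -> R).
Variables (eta : nat -> 'I_n -> A -> 'I_n -> R) (Qt : nat -> qfactor R n A).
Variable (Q' : qfactor R n A).
Hypotheses (rho0 : 0 <= rho) (rho1 : rho < 1) (th0 : 0 <= theta).
Hypothesis Tlip : forall Q Q2 i a, `|T Q i a - T Q2 i a| <= rho * qnorm (qdiff Q Q2).
Hypothesis TQ' : forall i a, T Q' i a = Q' i a.
Hypothesis eta1 : forall t i a k, `|eta t i a k| <= 1.
Hypothesis g0 : forall t, 0 <= gamma t.
Hypothesis g1 : exists T0, forall t, (T0 <= t)%N -> gamma t.+1 <= 1.
Hypothesis gdiv : forall M, exists N, forall t, (N <= t)%N -> M <= \sum_(s < t) gamma s.
Hypothesis Hrec : forall t i a, Qt t.+1 i a = (1 - gamma t.+1) * Qt t i a +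
   gamma t.+1 * (T (Qt t) i a + theta * \sum_k vmin a0 (Qt t) k * eta t i a k).
Hypothesis Hcv : forall i a k, cvgn (fun m => \sum_(r < m) gamma r.+1 * eta r i a k).

Lemma qnorm_tri (Q Q2 : qfactor R n A) : qnorm Q <= qnorm (qdiff Q Q2) + qnorm Q2.
Proof.
apply: qnorm_le; first by apply: addr_ge0; exact: qnorm_ge0.
move=> i a; have := qnorm_entry (qdiff Q Q2) i a; have := qnorm_entry Q2 i a.
have := ler_normD (Q i a - Q2 i a) (Q2 i a); rewrite subrK /qdiff; lra.
Qed.

Lemma det_conv : forall i a, (fun t => Qt t i a) @ \oo --> Q' i a.
Proof.
set S := fun m i a k => \sum_(r < m) gamma r.+1 * eta r i a k.
set r := fun m i a k => S m i a k - limn (fun m => S m i a k).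
have rS : forall m i a k, r m.+1 i a k - r m i a k = gamma m.+1 * eta m i a k.
  by move=> m i a k; rewrite /r /S big_ord_recr /=; ring.
have rz : forall i a k e, 0 < e -> \forall m \near \oo, `|r m i a k| < e.
  move=> i a k e e0; have := @Hcv i a k; move/cvg_ex => [l hl].
  have := hl; move=> /cvgrPdist_lt /(_ e e0); apply: filterS => m.
  by rewrite /r /S (cvg_lim _ hl) // distrC.
set Rr := fun m => \sum_i \sum_a \sum_k `|r m i a k|.
have Rr0 : forall m, 0 <= Rr m.
  by move=> m; do 3!(apply: sumr_ge0 => ? _).
have Rrge : forall m i a, \sum_k `|r m i a k| <= Rr m.
  move=> m i a; rewrite /Rr; apply: le_trans (_ : \sum_a \sum_k `|r m i a k| <= _); last first.
    apply: (@single_le_sum _ _ (fun i => \sum_a \sum_k `|r m i a k|) i) => x.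
    by do 2!(apply: sumr_ge0 => ? _).
  apply: (@single_le_sum _ _ (fun a => \sum_k `|r m i a k|) a) => x.
  by apply: sumr_ge0 => ? _.
have Rrz : evz Rr.
  move=> e e0.
  set M := (n * #|A| * n)%N.
  set del := e / M.+1%:R.
  have del0 : 0 < del by rewrite divr_gt0 // ltr0n.
  have h : \forall m \near \oo, forall i a k, `|r m i a k| < del.
    apply: filter_forall => i; apply: filter_forall => a; apply: filter_forall => k.
    exact: rz.
  move: h => [N _ HN]; exists N => m /HN hm.
  apply: le_trans (_ : \sum_(i < n) \sum_(a : A) \sum_(k < n) del <= _).
    by do 3!(apply: ler_sum => ? _); exact: ltW.
  rewrite !sumr_const !card_ord -!mulrnA -mulr_natr.
  have -> : e = del * M.+1%:R by rewrite /del divfK // pnatr_eq0.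
  apply: ler_wpM2l; first exact: ltW.
  by rewrite ler_nat /M cardT -mulnA leqnSn.
set B := qnorm Q'.
have B0 : 0 <= B by exact: qnorm_ge0.
set qq := fun t => qnorm (qdiff (Qt t) Q').
have qq0 : forall t, 0 <= qq t by move=> t; exact: qnorm_ge0.
set v := fun t k => vmin a0 (Qt t) k.
set Y := fun t i a => Qt t i a - theta * \sum_k v t k * r t i a k.
set e := fun t => qnorm (qdiff (Y t) Q').
have e0 : forall t, 0 <= e t by move=> t; exact: qnorm_ge0.
set K := 2 + theta * n%:R.
have K0 : 0 <= K by rewrite /K addr_ge0 // mulr_ge0.
set kap := fun t => theta * (Rr t + K * Rr t.+1).
have kap0 : forall t, 0 <= kap t.
  by move=> t; rewrite /kap mulr_ge0 // addr_ge0 // mulr_ge0.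
have Qb : forall t i a, `|Qt t i a| <= qq t + B.
  move=> t i a; apply: le_trans (qnorm_entry _ i a) _; exact: qnorm_tri.
have vb : forall t k, `|v t k| <= qq t + B.
  move=> t k; apply: le_trans (vmin_abs _ _ _) _; exact: qnorm_tri.
have sumvr : forall t i a, `|\sum_k v t k * r t i a k| <= (qq t + B) * Rr t.
  move=> t i a; apply: le_trans (ler_norm_sum _ _ _) _.
  apply: le_trans (_ : \sum_k (qq t + B) * `|r t i a k| <= _).
    apply: ler_sum => k _; rewrite normrM; apply: ler_wpM2r => //; exact: vb.
  rewrite -mulr_sumr; apply: ler_wpM2l; [by rewrite addr_ge0 | exact: Rrge].
have H2 : forall t, qq t <= e t + kap t * (qq t + B).
  move=> t; apply: qnorm_le.
    by apply: addr_ge0 => //; apply: mulr_ge0 => //; rewrite addr_ge0.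
  move=> i a; rewrite /qdiff.
  have h1 := qnorm_entry (qdiff (Y t) Q') i a; rewrite /qdiff /Y in h1.
  have h2 := sumvr t i a.
  set s := \sum_k v t k * r t i a k in h1 h2.
  have -> : Qt t i a - Q' i a = (Qt t i a - theta * s - Q' i a) + theta * s by ring.
  apply: le_trans (ler_normD _ _) _; rewrite normrM ger0_norm //.
  have h3 : theta * `|s| <= theta * ((qq t + B) * Rr t) by exact: ler_wpM2l.
  have h4 : theta * ((qq t + B) * Rr t) <= kap t * (qq t + B).
    have -> : theta * ((qq t + B) * Rr t) = (theta * Rr t) * (qq t + B) by ring.
    rewrite /kap; apply: ler_wpM2r; first by rewrite addr_ge0.
    apply: ler_wpM2l => //; rewrite lerDl; exact: mulr_ge0.
  rewrite -/(e t) in h1; lra.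
have Dq : forall t i a, `|Qt t.+1 i a - Qt t i a| <= gamma t.+1 * (K * (qq t + B)).
  move=> t i a; rewrite Hrec.
  set g := gamma t.+1.
  set s := \sum_k vmin a0 (Qt t) k * eta t i a k.
  have -> : (1 - g) * Qt t i a + g * (T (Qt t) i a + theta * s) - Qt t i a =
            g * (T (Qt t) i a - Qt t i a + theta * s) by ring.
  rewrite normrM (ger0_norm (g0 t.+1)).
  suff hX : `|T (Qt t) i a - Qt t i a + theta * s| <= K * (qq t + B).
    have := g0 t.+1; rewrite -/g => hg.
    move: hX hg; move: (`|_|) (K * (qq t + B)) => x y hx hg.
    clear_fun_lets; nra.
  have hT : `|T (Qt t) i a| <= qq t + B.
    have := Tlip (Qt t) Q' i a; rewrite TQ'.
    have := ler_normD (T (Qt t) i a - Q' i a) (Q' i a); rewrite subrK.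
    have := qnorm_entry Q' i a.
    have : rho * qq t <= qq t by apply: ler_piMl => //; exact: ltW.
    rewrite /qq /B; lra.
  have hs : `|s| <= n%:R * (qq t + B).
    apply: le_trans (ler_norm_sum _ _ _) _.
    apply: le_trans (_ : \sum_(k < n) (qq t + B) <= _); last first.
      by rewrite sumr_const card_ord mulr_natl.
    apply: ler_sum => k _; rewrite normrM.
    rewrite -[X in _ <= X]mulr1; apply: ler_pM => //; try exact: vb; try exact: eta1.
  have := ler_normD (T (Qt t) i a - Qt t i a) (theta * s).
  have := ler_normB (T (Qt t) i a) (Qt t i a).
  rewrite normrM ger0_norm //.
  have := Qb t i a.
  have : theta * `|s| <= theta * (n%:R * (qq t + B)) by exact: ler_wpM2l.
  rewrite /K; lra.
have dv : forall t k, `|v t.+1 k - v t k| <= gamma t.+1 * (K * (qq t + B)).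
  move=> t k; apply: le_trans (vmin_lip _ _ _ _) _.
  apply: qnorm_le; first by rewrite mulr_ge0 // mulr_ge0 // addr_ge0.
  by move=> i a; exact: Dq.
have [T0 hT0] := g1.
have H1 : forall t, (T0 <= t)%N -> e t.+1 <=
    (1 - gamma t.+1) * e t + gamma t.+1 * (rho * qq t + kap t * (qq t + B)).
  move=> t ht.
  have gl1 := hT0 t ht.
  have gg0 := g0 t.+1.
  apply: qnorm_le.
    apply: addr_ge0; first by apply: mulr_ge0 => //; lra.
    apply: mulr_ge0 => //; apply: addr_ge0; first exact: mulr_ge0.
    by apply: mulr_ge0 => //; rewrite addr_ge0.
  move=> i a; rewrite /qdiff.
  set g := gamma t.+1 in gl1 gg0 *.
  set s1 := \sum_k v t.+1 k * r t.+1 i a k.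
  set s2 := \sum_k v t k * r t.+1 i a k.
  set s3 := \sum_k v t k * r t i a k.
  set s4 := \sum_k v t k * eta t i a k.
  have e4 : g * s4 = s2 - s3.
    rewrite /s4 mulr_sumr /s2 /s3 -sumrB; apply: eq_bigr => k _.
    by rewrite -mulrBr rS /g; ring.
  have e5 : \sum_k (v t.+1 k - v t k) * r t.+1 i a k = s1 - s2.
    by rewrite /s1 /s2 -sumrB; apply: eq_bigr => k _; rewrite mulrBl.
  have ident : Y t.+1 i a - Q' i a =
      (1 - g) * (Y t i a - Q' i a) + g * (T (Qt t) i a - T Q' i a)
      + g * (Y t i a - Qt t i a)
      - theta * \sum_k (v t.+1 k - v t k) * r t.+1 i a k.
    rewrite e5 /Y -/s1 -/s3 Hrec TQ' -/g.
    have -> : g * (T (Qt t) i a + theta * \sum_k vmin a0 (Qt t) k * eta t i a k) =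
              g * T (Qt t) i a + theta * (g * s4) by rewrite /s4 /v; ring.
    rewrite e4; ring.
  rewrite ident.
  have n1 : `|(1 - g) * (Y t i a - Q' i a)| <= (1 - g) * e t.
    rewrite normrM ger0_norm; last lra.
    apply: ler_wpM2l; first lra.
    exact: (qnorm_entry (qdiff (Y t) Q') i a).
  have n2 : `|g * (T (Qt t) i a - T Q' i a)| <= g * (rho * qq t).
    by rewrite normrM ger0_norm //; apply: ler_wpM2l => //; exact: Tlip.
  have n3 : `|g * (Y t i a - Qt t i a)| <= g * (theta * ((qq t + B) * Rr t)).
    rewrite normrM ger0_norm //; apply: ler_wpM2l => //.
    rewrite /Y addrAC subrr add0r normrN normrM ger0_norm //.
    by apply: ler_wpM2l => //; exact: sumvr.
  have n4 : `|theta * \sum_k (v t.+1 k - v t k) * r t.+1 i a k| <=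
            theta * (g * (K * (qq t + B)) * Rr t.+1).
    rewrite normrM ger0_norm //; apply: ler_wpM2l => //.
    apply: le_trans (ler_norm_sum _ _ _) _.
    apply: le_trans (_ : \sum_k g * (K * (qq t + B)) * `|r t.+1 i a k| <= _).
      apply: ler_sum => k _; rewrite normrM; apply: ler_wpM2r => //; exact: dv.
    rewrite -mulr_sumr; apply: ler_wpM2l; last exact: Rrge.
    by rewrite mulr_ge0 // mulr_ge0 // addr_ge0.
  have tri : forall x1 x2 x3 x4 : R, `|x1 + x2 + x3 - x4| <= `|x1| + `|x2| + `|x3| + `|x4|.
    move=> x1 x2 x3 x4; apply: le_trans (ler_normB _ _) _.
    rewrite lerD2r; apply: le_trans (ler_normD _ _) _.
    by rewrite lerD2r; exact: ler_normD.
  apply: le_trans (tri _ _ _ _) _.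
  have -> : (1 - g) * e t + g * (rho * qq t + kap t * (qq t + B)) =
      (1 - g) * e t + g * (rho * qq t) + g * (theta * ((qq t + B) * Rr t))
      + theta * (g * (K * (qq t + B)) * Rr t.+1) by rewrite /kap; ring.
  lra.
have kapz : evz kap.
  move=> eps eps0.
  set c1 := theta * (1 + K) + 1.
  have c10 : 0 < c1 by rewrite /c1 ltr_pwDr // mulr_ge0 // addr_ge0.
  have [N hN] := Rrz (eps / c1) (divr_gt0 eps0 c10).
  exists N => t ht.
  have h1 := hN t ht.
  have h2 := hN t.+1 (leqW ht).
  have := Rr0 t; have := Rr0 t.+1.
  have e1 : eps = (theta * (1 + K) + 1) * (eps / c1) by rewrite /c1 mulrC divfK // gt_eqF.
  rewrite /kap; move: (Rr t) (Rr t.+1) h1 h2 => x y h1 h2 hx hy.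
  have : theta * (x + K * y) <= theta * (eps / c1 + K * (eps / c1)).
    apply: ler_wpM2l => //; apply: lerD => //; exact: ler_wpM2l.
  have : 0 <= eps / c1 by apply: divr_ge0; [exact: ltW | exact: ltW].
  nra.
have hg01 : forall t, (T0 <= t)%N -> 0 <= gamma t.+1 <= 1.
  by move=> t ht; rewrite g0 hT0.
have qz := combine rho0 rho1 B0 e0 qq0 kap0 kapz hg01 H1 H2 gdiv.
move=> i a; apply/cvgrPdist_lt => eps eps0.
have [N hN] := qz (eps / 2) (divr_gt0 eps0 (ltr0n _ 2)).
exists N => // t /= ht.
have := qnorm_entry (qdiff (Qt t) Q') i a; rewrite /qdiff distrC.
have := hN t ht; rewrite /qq; lra.
Qed.

End Det.
Unset Implicit Arguments.

Theorem theorem2 (R : realType) (d : measure_display) (Omega : measurableType d)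
  (P : probability Omega R) (n : nat) (A : finType) (a0 : A)
  (c : 'I_n -> A -> R) (theta : R)
  (p : A -> 'I_n -> 'rV[R]_n) (U Uhat : A -> 'I_n -> set 'rV[R]_n)
  (Qstar : qfactor R n A) (gamma : nat -> R)
  (J : nat -> 'I_n -> A -> Omega -> 'I_n) (Q0 : qfactor R n A) :
  0 < theta < 1 ->
  (forall a i, simplex (p a i)) ->
  (forall a i, U a i !=set0 /\ compact (U a i)) ->
  (forall a i, [set p a i + x | x in U a i] `<=` simplex) ->
  (forall a i, U a i `<=` Uhat a i /\ Uhat a i !=set0 /\ compact (Uhat a i)) ->
  (* Q* : the robust optimal Q-factors *)
  (forall i a, Qstar i a = c i a + theta *
       support_fun [set p a i + x | x in U a i] (vvec a0 Qstar)) ->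
  (* step lengths *)
  (forall t, 0 <= gamma t) ->
  series gamma @ \oo --> +oo ->
  cvgn (series (fun t => gamma t ^+ 2)) ->
  (* samples: J t i a ~ p^a_i, fresh (mutually independent) *)
  (forall t i a k, measurable [set w | J t i a w = k]) ->
  (forall t i a k, P [set w | J t i a w = k] = (p a i ord0 k)%:E) ->
  mutually_independent P (fun tia : nat * 'I_n * A => J tia.1.1 tia.1.2 tia.2) ->
  let beta := \big[Num.max/0]_(i : 'I_n) \big[Num.max/0]_(a : A)
                beta_of (Uhat a i) (U a i) in
  theta * (1 + beta) < 1 ->
  let eps := theta * beta / (1 - theta * (1 + beta)) in
  {ae P, forall w, exists Q' : qfactor R n A,
     (forall i a, (fun t => robustQ a0 c theta Uhat gamma J Q0 t w i a) @ \oo --> Q' i a) /\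
     qnorm (fun i a => Q' i a - Qstar i a) <= eps * qnorm Qstar}.
Proof.
move=> /andP[th0 th1] Hpsimp HUc Hsimp HUsub0 HQ Hg0 Hdiv Hg2 Hmeas Hprob Hind bet Hb eps.
have HU : forall a i, U a i !=set0 := fun a i => (HUc a i).1.
have HUh : forall a i, U a i `<=` Uhat a i := fun a i => (HUsub0 a i).1.
have HM : forall a i, exists M, forall s, Uhat a i s -> forall k, `|s ord0 k| <= M.
  move=> a i; have [M [_ hM]] := compact_entry_bound (HUsub0 a i).2.2; by exists M.
have th0' : 0 <= theta := ltW th0.
have bE : bet = beta U Uhat by [].
have b0 : 0 <= bet by rewrite bE; exact: beta_ge0.
have rhoE : rho theta U Uhat = theta * (1 + bet) by [].
have rho0 : 0 <= rho theta U Uhat by rewrite rhoE mulr_ge0 // addr_ge0.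
have rho1 : rho theta U Uhat < 1 by rewrite rhoE.
have Tlip := Tp_lip a0 c Hsimp HU HUh HM th0'.
have [Q' TQ'] := fp_exists rho0 rho1 Tlip.
have Tst := Tstar_bound Hsimp HU HUh HM th0' HQ.
have bound : qnorm (fun i a => Q' i a - Qstar i a) <= eps * qnorm Qstar.
  set D := qnorm _.
  have D0 : 0 <= D by exact: qnorm_ge0.
  have N0 : 0 <= qnorm Qstar by exact: qnorm_ge0.
  have hD : D <= theta * (1 + bet) * D + theta * bet * qnorm Qstar.
    apply: qnorm_le.
      by apply: addr_ge0; apply: mulr_ge0 => //; apply: mulr_ge0 => //; rewrite addr_ge0.
    move=> i a.
    have h1 := Tlip Q' Qstar i a.
    have h2 := Tst i a.
    rewrite TQ' in h1.
    have -> : Q' i a - Qstar i a = (Q' i a - Tp a0 c theta p Uhat Qstar i a)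
          + (Tp a0 c theta p Uhat Qstar i a - Qstar i a) by ring.
    apply: le_trans (ler_normD _ _) _.
    rewrite rhoE in h1; rewrite -bE in h2.
    have e : qnorm (qdiff Q' Qstar) = D by [].
    rewrite e in h1; lra.
  have pos : 0 < 1 - theta * (1 + bet) by lra.
  rewrite /eps -mulrA mulrCA ler_pdivlMl // mulrC.
  nra.
have Hatom : forall i a (us : seq nat) (y : nat -> 'I_n), uniq us ->
  P (\big[setI/setT]_(u <- us) [set w | J u i a w = y u]) =
  (\prod_(u <- us) p a i ord0 (y u))%:E.
  move=> i a us y uus.
  set s := [seq (u, i, a) | u <- us].
  have us' : uniq s by rewrite map_inj_uniq // => u v [].
  have := Hind s (fun tia => y tia.1.1) us'.
  have -> : \bigcap_(kk in [set kk | kk \in s])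
      [set w | J kk.1.1 kk.1.2 kk.2 w = y kk.1.1] =
      \big[setI/setT]_(u <- us) [set w | J u i a w = y u].
    apply/seteqP; split => w.
    - move=> hw; apply/bigsetI_seqP => u uin; apply: (hw (u, i, a)).
      by rewrite /= (map_f (fun u => (u, i, a))).
    - move/bigsetI_seqP => hw kk /= /mapP [u uin ->] /=; exact: hw.
  move=> ->; rewrite big_map -prodEFin; apply: eq_bigr => u _; exact: Hprob.
have Hq0 : forall a i x, 0 <= p a i ord0 x.
  by move=> a i x; have [h _] := Hpsimp a i; exact: h.
have Hq1 : forall a i, \sum_x p a i ord0 x = 1.
  by move=> a i; have [_ h] := Hpsimp a i.
have hae : forall i a k, {ae P, forall w,
    cvgn (fun m => Sp J i a k (fun x => p a i ord0 x) gamma m w)}.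
  move=> i a k.
  exact: (as_cvg k (fun t x => Hmeas t i a x) (Hq0 a i) (Hq1 a i) (Hatom i a) Hg2).
have hall : {ae P, forall w, forall i a k,
    cvgn (fun m => Sp J i a k (fun x => p a i ord0 x) gamma m w)}.
  apply: filter_forall => i; apply: filter_forall => a; apply: filter_forall => k.
  exact: hae.
apply: filterS hall => w hw.
exists Q'; split => // i a.
have g1 : exists T0, forall t, (T0 <= t)%N -> gamma t.+1 <= 1.
  have := cvg_series_cvg_0 Hg2.
  move=> /cvgrPdist_lt /(_ 1 ltr01) [N _ HN].
  exists N => t ht; have := HN t.+1 (leqW ht); rewrite /= sub0r normrN.
  have := Hg0 t.+1; move: (gamma t.+1) => x hx.
  rewrite ger0_norm; last exact: sqr_ge0.
  move=> h; nra.
have gdiv : forall M, exists N, forall t, (N <= t)%N -> M <= \sum_(s < t) gamma s.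
  move=> M; move: Hdiv => /cvgryPge /(_ M) [N _ HN].
  exists N => t /HN /=; by rewrite /series /= big_mkord.
have eta1 : forall t i a k,
    `|((J t.+1 i a w == k)%:R - p a i ord0 k : R)| <= 1.
  move=> t i' a' k; have := Hq0 a' i' k.
  have := simplex_entry k (Hpsimp a' i'); move=> /andP[_ h1] h0.
  case: (J t.+1 i' a' w == k) => /=; rewrite ler_norml; apply/andP; split; lra.
have Hrec : forall t i a,
  robustQ a0 c theta Uhat gamma J Q0 t.+1 w i a =
  (1 - gamma t.+1) * robustQ a0 c theta Uhat gamma J Q0 t w i a +
  gamma t.+1 * (Tp a0 c theta p Uhat (robustQ a0 c theta Uhat gamma J Q0 t w) i a +
     theta * \sum_k vmin a0 (robustQ a0 c theta Uhat gamma J Q0 t w) k *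
       ((J t.+1 i a w == k)%:R - p a i ord0 k)).
  move=> t i' a'; rewrite /= /Tp /dot.
  set Q := robustQ a0 c theta Uhat gamma J Q0 t w.
  set j := J t.+1 i' a' w.
  have -> : vmin a0 Q j = \sum_k p a' i' ord0 k * vvec a0 Q ord0 k +
      \sum_k vmin a0 Q k * ((j == k)%:R - p a' i' ord0 k).
    rewrite -big_split /=.
    rewrite (eq_bigr (fun k => vmin a0 Q k * (k == j)%:R)); last first.
      by move=> k _; rewrite vvecE eq_sym; ring.
    by rewrite sum_delta.
  ring.
exact: (det_conv rho0 rho1 th0' Tlip TQ' eta1 Hg0 g1 gdiv Hrec (fun i a k => hw i a k)).
Qed.
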